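(* Let $f(x)=\frac1n\sum_{i=1}^nf_i(x)$ on $\mathbb{R}^d$ where each $f_i$ is convex and lower bounded, and let $x^*$ be a minimizer of $f$. Consider the stochastic subgradient method with the DecSPS-NS stepsize (defined in the context) with $c_k=c_0\sqrt{k+1}$ for some $c_0>0$. Then for every $K\ge1$, $$\mathbb{E}[f(\bar x^K)-f(x^* )]\le\frac{D^2/\gamma_\ell+2\gamma_bG^2}{\sqrt K},$$ where $\bar x^K=\frac1K\sum_{k=0}^{K-1}x^k$, $D^2:=\max_{k\in[K-1]}\|x^k-x^*\|^2$ and $G^2:=\max_{k\in[K-1]}\|g_{\mathcal S_k}(x^k)\|^2$.
   Context: Minibatches: fix a batch size $B$; at each iteration a subset $\mathcal S_k\subseteq[n]$, $|\mathcal S_k|=B$, is sampled uniformly at random, independently across iterations. For $\mathcal S\subseteq[n]$, $f_{\mathcal S}:=\frac1{|\mathcal S|}\sum_{i\in\mathcal S}f_i$, $f^*_{\mathcal S}:=\inf_xf_{\mathcal S}(x)$, $\ell^*_{\mathcal S}$ is a given real number with $\ell^*_{\mathcal S}\le f^*_{\mathcal S}$, and $g_{\mathcal S}(x)$ is a subgradient of $f_{\mathcal S}$ at $x$. Method: $x^{k+1}=x^k-\gamma_kg_{\mathcal S_k}(x^k)$. DecSPS-NS stepsize: $\gamma_k:=\frac1{c_k}\min\left\{\max\left\{c_0\gamma_\ell,\ \frac{f_{\mathcal S_k}(x^k)-\ell^*_{\mathcal S_k}}{\|g_{\mathcal S_k}(x^k)\|^2}\right\},\ c_{k-1}\gamma_{k-1}\right\}$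 for $k\ge0$, with $c_{-1}=c_0$, $\gamma_{-1}=\gamma_b$, where $0<\gamma_\ell\le\gamma_b$ are fixed constants. $[K-1]$ denotes $\{0,\dots,K-1\}$. *)

(* Defs.v *)
From HB Require Import structures.
From mathcomp Require Import all_boot all_order all_algebra.
From mathcomp Require Import reals.
Set Implicit Arguments. Unset Strict Implicit. Unset Printing Implicit Defensive.
Import Order.TTheory GRing.Theory Num.Theory.
Local Open Scope ring_scope.

Section Defs.
Variables (R : realType) (n d : nat).
Notation vec := 'rV[R]_d.

Definition dotv (u v : vec) : R := \sum_(j < d) u ord0 j * v ord0 j.
Definition normsq (u : vec) : R := dotv u u.

Definition convexf (h : vec -> R) : Prop :=
  forall (x y : vec) (t : R), 0 <= t -> t <= 1 ->
    h (t *: x + (1 - t) *: y) <= t * h x + (1 - t) * h y.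

Definition is_subgrad (h : vec -> R) (x v : vec) : Prop :=
  forall y : vec, h x + dotv v (y - x) <= h y.

Definition favg (f : 'I_n -> vec -> R) (x : vec) : R :=
  n%:R^-1 * \sum_(i < n) f i x.

Definition fS (f : 'I_n -> vec -> R) (S : {set 'I_n}) (x : vec) : R :=
  (#|S|%:R)^-1 * \sum_(i in S) f i x.

Definition csqrt (c0 : R) (k : nat) : R := c0 * Num.sqrt (k.+1)%:R.

(* DecSPS-NS run along a sequence of minibatches s : nat -> {set 'I_n}.
   decsps_state k = (x^k, c_{k-1} * gamma_{k-1}), with c_{-1} gamma_{-1} = c0 gamma_b.
   gamma_k = (1/c_k) min{ max{c0 gamma_l, (f_{S_k}(x^k) - l*_{S_k})/||g_{S_k}(x^k)||^2},
                          c_{k-1} gamma_{k-1} }. *)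
Fixpoint decsps_state (f : 'I_n -> vec -> R) (ell : {set 'I_n} -> R)
    (g : {set 'I_n} -> vec -> vec) (c : nat -> R) (c0 gl gb : R) (x0 : vec)
    (s : nat -> {set 'I_n}) (k : nat) : vec * R :=
  match k with
  | 0 => (x0, c0 * gb)
  | k'.+1 =>
      let st := decsps_state f ell g c c0 gl gb x0 s k' in
      let x := st.1 in
      let prev := st.2 in
      let S := s k' in
      let gk := g S x in
      let m := Num.min (Num.max (c0 * gl) ((fS f S x - ell S) / normsq gk)) prev in
      let gam := m / c k' in
      (x - gam *: gk, c k' * gam)
  end.

Definition decsps_x f ell g c c0 gl gb x0 s k : vec :=
  (decsps_state f ell g c c0 gl gb x0 s k).1.

Definition seq_of (K : nat) (s : {ffun 'I_K -> {set 'I_n}}) (k : nat) : {set 'I_n} :=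
  odflt set0 (omap s (insub k)).

Definition admissible (K B : nat) (s : {ffun 'I_K -> {set 'I_n}}) : bool :=
  [forall k, #|s k| == B].

(* Expectation over S_0,...,S_{K-1} drawn independently and uniformly among
   the subsets of [n] of size B: uniform average over admissible paths. *)
Definition expect (K B : nat) (F : {ffun 'I_K -> {set 'I_n}} -> R) : R :=
  (#|[set s : {ffun 'I_K -> {set 'I_n}} | admissible B s]|%:R)^-1 * \sum_(s : {ffun 'I_K -> {set 'I_n}} | admissible B s) F s.

End Defs.

(* Main.v *)
Require Import Defs.
From HB Require Import structures.
From mathcomp Require Import all_boot all_order all_algebra.
From mathcomp Require Import reals.
From mathcomp Require Import fingroup perm.
From mathcomp Require Import ring lra.
Import Order.TTheory GRing.Theory Num.Theory.
Local Open Scope ring_scope.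

Section Dot.
Variables (R : realType) (d : nat).
Implicit Types (u v w a : 'rV[R]_d).

Lemma dotv_sumr (I : finType) u (w : I -> 'rV[R]_d) :
  dotv u (\sum_i w i) = \sum_i dotv u (w i).
Proof.
rewrite /dotv exchange_big /=; apply: eq_bigr => j _.
by rewrite summxE mulr_sumr.
Qed.

Lemma dotv0r u : dotv u 0 = 0.
Proof. by rewrite /dotv big1 // => j _; rewrite mxE mulr0. Qed.

Lemma normsq_ge0 u : 0 <= normsq u.
Proof. by rewrite /normsq /dotv; apply: sumr_ge0 => j _; rewrite -expr2 sqr_ge0. Qed.

Lemma normsq_step a v t :
  normsq (a - t *: v) = normsq a + 2 * t * dotv v (- a) + t ^+ 2 * normsq v.
Proof.
rewrite /normsq /dotv mulr_sumr mulr_sumr -!big_split /=.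
by apply: eq_bigr => j _; rewrite !mxE; ring.
Qed.

Lemma jensen_sub (h : 'rV[R]_d -> R) (K : nat) (X : 'I_K -> 'rV[R]_d) :
  (0 < K)%N -> (forall x, exists v, is_subgrad h x v) ->
  K%:R * h (K%:R^-1 *: \sum_k X k) <= \sum_k h (X k).
Proof.
move=> K0 hs; set xb := K%:R^-1 *: _.
have [v hv] := hs xb.
have H : \sum_(k < K) (h xb + dotv v (X k - xb)) <= \sum_k h (X k).
  by apply: ler_sum => k _; apply: hv.
apply: le_trans H; rewrite big_split /= -dotv_sumr sumrB sumr_const card_ord.
have -> : \sum_(k < K) xb = \sum_k X k.
  rewrite sumr_const card_ord -scaler_nat /xb scalerA mulfV ?scale1r //.
  by rewrite pnatr_eq0 -lt0n.
by rewrite subrr dotv0r addr0 mulr_natl.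
Qed.
End Dot.

Section Real.
Variable R : realType.

Lemma telesc (K : nat) (D w : nat -> R) Dm :
  (0 < K)%N -> (forall k, (k < K)%N -> D k <= Dm) -> (forall k, 0 <= w k) ->
  (forall k, w k <= w k.+1) -> (forall k, 0 <= D k) ->
  \sum_(k < K) (D k - D k.+1) * w k <= Dm * w K.-1.
Proof.
move=> K0 hD hw hm hD0.
have aux : forall j, (j < K)%N ->
  \sum_(k < j.+1) (D k - D k.+1) * w k <= (Dm - D j.+1) * w j.
  elim=> [|j IH] hj.
    rewrite big_ord_recr big_ord0 /= add0r.
    by apply: ler_wpM2r => //; rewrite lerD2r hD.
  rewrite big_ord_recr /=.
  have h1 := IH (ltnW hj).
  have h2 : 0 <= Dm - D j.+1 by rewrite subr_ge0 hD.
  have h3 := hm j.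
  nra.
have := aux K.-1; rewrite prednK // => /(_ (leqnn _)) h.
apply: le_trans h _.
by apply: ler_wpM2r => //; rewrite lerBlDr lerDl.
Qed.

Lemma sum_isqrt (K : nat) :
  \sum_(k < K) (Num.sqrt (k.+1)%:R)^-1 <= 2 * Num.sqrt (K%:R) :> R.
Proof.
elim: K => [|K IH]; first by rewrite big_ord0 sqrtr0 mulr0.
rewrite big_ord_recr /=.
set a := Num.sqrt (K.+1)%:R; pose b := Num.sqrt (K%:R : R).
have a0 : 0 < a by rewrite sqrtr_gt0 ltr0n.
have b0 : 0 <= b by rewrite sqrtr_ge0.
have ab : a ^+ 2 = b ^+ 2 + 1.
  by rewrite /a /b !sqr_sqrtr ?ler0n // -natr1.
have at1 : a * a^-1 = 1 by rewrite mulfV // gt_eqF.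
have t0 : 0 < a^-1 by rewrite invr_gt0.
set t := a^-1 in at1 t0 *.
apply: le_trans (lerD IH (lexx t)) _.
suff : (2 * b + t) * a <= (2 * a) * a by rewrite ler_pM2r.
have hh : 0 <= (a - b) ^+ 2 by rewrite sqr_ge0.
nra.
Qed.
End Real.

Section Unb.
Variables (R : realType) (n d B : nat) (f : 'I_n -> 'rV[R]_d -> R).
Let A := [set T : {set 'I_n} | #|T| == B].

Lemma count_sym (i j : 'I_n) :
  \sum_(T in A) ((i \in T)%:R : R) = \sum_(T in A) ((j \in T)%:R).
Proof.
pose s := tperm i j.
pose phi := fun T : {set 'I_n} => s @: T.
have phiK : involutive phi.
  move=> T; rewrite /phi -imset_comp.
  rewrite (eq_imset _ (g := id)) ?imset_id // => x /=.
  by rewrite tpermK.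
rewrite (reindex_inj (inv_inj phiK)); apply: eq_big => T.
  by rewrite /phi !inE card_imset //; apply: perm_inj.
move=> _; rewrite /phi -{1}(tpermR i j) mem_imset //; apply: perm_inj.
Qed.

Lemma sum_exch (G : 'I_n -> R) :
  \sum_(T in A) \sum_(i in T) G i = \sum_i (\sum_(T in A) ((i \in T)%:R : R)) * G i.
Proof.
under eq_bigr => T _ do rewrite big_mkcond.
rewrite exchange_big; apply: eq_bigr => i _; rewrite mulr_suml.
by apply: eq_bigr => T _; case: (i \in T); rewrite ?mul1r ?mul0r.
Qed.

Lemma sum_in_sets (G : 'I_n -> R) (i0 : 'I_n) :
  n%:R * \sum_(T in A) \sum_(i in T) G i = (#|A| * B)%:R * \sum_i G i.
Proof.
set c := \sum_(T in A) ((i0 \in T)%:R : R).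
have E : forall G : 'I_n -> R, \sum_(T in A) \sum_(i in T) G i = c * \sum_i G i.
  move=> H; rewrite sum_exch mulr_sumr; apply: eq_bigr => i _.
  by rewrite (count_sym i i0).
have nc : n%:R * c = (#|A| * B)%:R.
  have := E (fun _ => 1).
  rewrite sumr_const card_ord.
  rewrite (eq_bigr (fun _ => B%:R)); last first.
    by move=> T; rewrite inE => /eqP <-; rewrite sumr_const.
  rewrite sumr_const natrM => h.
  have h2 : B%:R * #|A|%:R = c * n%:R := etrans (mulr_natr _ _) h.
  by rewrite mulrC [_%:R * B%:R]mulrC h2.
by rewrite E mulrA nc.
Qed.

Lemma unbiased (y : 'rV[R]_d) : (0 < n)%N -> (0 < B)%N ->
  \sum_(T in A) fS f T y = #|A|%:R * favg f y.
Proof.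
move=> n0 B0.
transitivity (\sum_(T in A) B%:R^-1 * \sum_(i in T) f i y).
  by apply: eq_bigr => T; rewrite inE => /eqP hT; rewrite /fS hT.
rewrite -mulr_sumr.
have h := sum_in_sets (fun i => f i y) (Ordinal n0).
have nn : n%:R != 0 :> R by rewrite pnatr_eq0 -lt0n.
have nB : B%:R != 0 :> R by rewrite pnatr_eq0 -lt0n.
have -> : \sum_(T in A) \sum_(i in T) f i y =
   n%:R^-1 * ((#|A| * B)%:R * \sum_i f i y) by rewrite -h mulKf.
rewrite /favg natrM; field.
by rewrite nn nB.
Qed.
End Unb.

Section Indep.
Variables (R : realType) (n K B : nat).
Let A := [set T : {set 'I_n} | #|T| == B].
Definition upd (s : {ffun 'I_K -> {set 'I_n}}) (k : 'I_K) T :=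
  [ffun j => if j == k then T else s j].

Lemma adm_upd s k T :
  (admissible B (upd s k T) && (s k \in A)) = (admissible B s && (T \in A)).
Proof.
rewrite /admissible !inE.
apply/andP/andP => [[/forallP h1 h2] | [/forallP h1 h2]]; split.
- apply/forallP => j /=; case: (eqVneq j k) => [->|njk] //.
  by have := h1 j; rewrite ffunE (negbTE njk).
- by have := h1 k; rewrite ffunE eqxx.
- apply/forallP => j /=; rewrite ffunE; case: (eqVneq j k) => [_|njk] //.
  exact: h1.
Qed.

Lemma indep (k : 'I_K) (H : {ffun 'I_K -> {set 'I_n}} -> {set 'I_n} -> R) :
  (forall s T U, H (upd s k U) T = H s T) ->
  #|A|%:R * \sum_(s | admissible B s) H s (s k) =
  \sum_(s | admissible B s) \sum_(T in A) H s T.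
Proof.
move=> Hi; rewrite pair_big_dep /=.
pose h := fun p : {ffun 'I_K -> {set 'I_n}} * {set 'I_n} => (upd p.1 k p.2, p.1 k).
have hK : involutive h.
  move=> [s T]; rewrite /h /=; congr pair; last by rewrite ffunE eqxx.
  apply/ffunP => j; rewrite /upd !ffunE; by case: eqP => // ->.
rewrite (reindex_inj (inv_inj hK)) /=.
rewrite (eq_big (fun p => admissible B p.1 && (p.2 \in A))
   (fun p => H p.1 (p.1 k))); first last.
- by move=> p _; rewrite /h /= Hi.
- by move=> p; rewrite /h /= adm_upd.
rewrite -(pair_big_dep (fun s => admissible B s) (fun s T => T \in A)
   (fun s T => H s (s k))) /=.
rewrite mulr_sumr; apply: eq_bigr => s _.
by rewrite sumr_const mulr_natl.
Qed.
End Indep.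

Section Dec.
Variables (R : realType) (n d : nat) (f : 'I_n -> 'rV[R]_d -> R)
  (ell : {set 'I_n} -> R) (g : {set 'I_n} -> 'rV[R]_d -> 'rV[R]_d)
  (c0 gl gb : R) (x0 : 'rV[R]_d).
Hypotheses (c0p : 0 < c0) (glp : 0 < gl) (glgb : gl <= gb).

Local Notation st s k := (decsps_state f ell g (csqrt c0) c0 gl gb x0 s k).
Definition gam s k := (st s k.+1).2 / csqrt c0 k.

Lemma st_ext s1 s2 k : (forall j, (j < k)%N -> s1 j = s2 j) -> st s1 k = st s2 k.
Proof.
elim: k => [//|k IH] H /=.
rewrite IH ?H // => j hj; apply: H; exact: ltnW.
Qed.

Lemma cpos k : 0 < csqrt c0 k.
Proof. by rewrite /csqrt mulr_gt0 // sqrtr_gt0 ltr0n. Qed.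

Lemma m_succ s k : (st s k.+1).2 =
  Num.min (Num.max (c0 * gl) ((fS f (s k) (st s k).1 - ell (s k)) /
     normsq (g (s k) (st s k).1))) (st s k).2.
Proof.
by rewrite /= mulrC divfK // gt_eqF // cpos.
Qed.

Lemma X_succ s k : (st s k.+1).1 = (st s k).1 - gam s k *: g (s k) (st s k).1.
Proof.
rewrite /gam m_succ /=; congr (_ - _ *: _).
Qed.

Lemma m_bounds s k : c0 * gl <= (st s k).2 <= c0 * gb.
Proof.
elim: k => [|k /andP[IH1 IH2]].
  by rewrite /= lexx andbT ler_pM2l.
rewrite m_succ le_min le_max lexx /= IH1 /=.
by rewrite ge_min IH2 orbT.
Qed.

Lemma m_mono s k : (st s k.+1).2 <= (st s k).2.
Proof. by rewrite m_succ ge_min lexx orbT. Qed.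

Lemma gam_ge s k : gl / Num.sqrt (k.+1)%:R <= gam s k.
Proof.
have /andP[h1 _] := m_bounds s k.+1.
rewrite /gam /csqrt invfM.
set m := (st s k.+1).2 in h1 *.
have a0 : 0 < c0^-1 by rewrite invr_gt0.
have ca : c0 * c0^-1 = 1 by rewrite mulfV // gt_eqF.
have b0 : 0 < (Num.sqrt (k.+1)%:R)^-1 :> R by rewrite invr_gt0 sqrtr_gt0 ltr0n.
set a := c0^-1 in a0 ca *; set b := (Num.sqrt _)^-1 in b0 *.
have h : gl <= m * a.
  by rewrite -{1}[gl]mul1r -ca mulrAC ler_wpM2r // ltW.
nra.
Qed.

Lemma gam_gt0 s k : 0 < gam s k.
Proof.
apply: lt_le_trans (gam_ge s k).
by rewrite divr_gt0 // sqrtr_gt0 ltr0n.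
Qed.

Lemma gam_le s k : gam s k <= gb / Num.sqrt (k.+1)%:R.
Proof.
have /andP[_ h1] := m_bounds s k.+1.
rewrite /gam /csqrt invfM.
set m := (st s k.+1).2 in h1 *.
have a0 : 0 < c0^-1 by rewrite invr_gt0.
have ca : c0 * c0^-1 = 1 by rewrite mulfV // gt_eqF.
have b0 : 0 < (Num.sqrt (k.+1)%:R)^-1 :> R by rewrite invr_gt0 sqrtr_gt0 ltr0n.
set a := c0^-1 in a0 ca *; set b := (Num.sqrt _)^-1 in b0 *.
have h : m * a <= gb.
  apply: (@le_trans _ _ (c0 * gb * a)); first by apply: ler_wpM2r => //; exact: ltW.
  by rewrite mulrAC ca mul1r.
nra.
Qed.

Lemma gam_mono s k : gam s k.+1 <= gam s k.
Proof.
have h1 := m_mono s k.+1.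
have /andP[h2 _] := m_bounds s k.+2.
rewrite /gam /csqrt.
set m1 := (st s k.+2).2 in h1 h2 *; set m0 := (st s k.+1).2 in h1 *.
have m10 : 0 <= m1 by apply: le_trans h2; rewrite mulr_ge0 // ltW.
apply: le_trans (_ : m1 / (c0 * Num.sqrt (k.+1)%:R) <= _).
  apply: ler_wpM2l => //.
  rewrite lef_pV2 ?posrE ?mulr_gt0 ?sqrtr_gt0 ?ltr0n //.
  by rewrite ler_pM2l // ler_sqrt ?ler_nat ?ltr0n.
by apply: ler_wpM2r => //; rewrite invr_ge0 ltW // cpos.
Qed.

Lemma winv_mono s k : (gam s k)^-1 <= (gam s k.+1)^-1.
Proof. by rewrite lef_pV2 ?posrE ?gam_gt0 // gam_mono. Qed.

Lemma winv_le s k : (gam s k)^-1 <= Num.sqrt (k.+1)%:R / gl.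
Proof.
have h := gam_ge s k.
rewrite -[_ / gl]invrK lef_pV2 ?posrE ?gam_gt0 //.
  by rewrite invf_div.
by rewrite invr_gt0 mulr_gt0 ?invr_gt0 ?sqrtr_gt0 ?ltr0n.
Qed.

Lemma descent s k xstar :
  is_subgrad (fS f (s k)) (st s k).1 (g (s k) (st s k).1) ->
  fS f (s k) (st s k).1 - fS f (s k) xstar <=
   (normsq ((st s k).1 - xstar) - normsq ((st s k.+1).1 - xstar)) * (gam s k)^-1 / 2
   + gam s k * normsq (g (s k) (st s k).1) / 2.
Proof.
move=> hs; have h := hs xstar.
rewrite X_succ.
have -> : (st s k).1 - gam s k *: g (s k) (st s k).1 - xstar =
   ((st s k).1 - xstar) - gam s k *: g (s k) (st s k).1 by rewrite addrAC.
rewrite normsq_step opprB.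
set X := (st s k).1 in h *; set G := g _ _ in h *.
have t0 : 0 < gam s k := gam_gt0 s k.
set t := gam s k in t0 *.
have tw : t * t^-1 = 1 by rewrite mulfV // gt_eqF.
set w := t^-1 in tw *.
set D := normsq (X - xstar); set dd := dotv G (xstar - X) in h *; set GG := normsq G.
set e1 := fS f (s k) X in h *; set e2 := fS f (s k) xstar in h *.
have -> : (D - (D + 2 * t * dd + t ^+ 2 * GG)) * w / 2 + t * GG / 2 =
   - dd * (t * w) + t * GG / 2 * (1 - t * w).
  by clearbody D dd GG w t; field.
rewrite tw subrr mulr0 addr0 mulr1.
lra.
Qed.

Lemma pathwise s (K B : nat) xstar Dm Gm :
  (0 < K)%N ->
  (forall k, (k < K)%N -> is_subgrad (fS f (s k)) (st s k).1 (g (s k) (st s k).1)) ->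
  (forall k, (k < K)%N -> normsq ((st s k).1 - xstar) <= Dm) ->
  (forall k, (k < K)%N -> normsq (g (s k) (st s k).1) <= Gm) ->
  \sum_(k < K) (fS f (s k) (st s k).1 - fS f (s k) xstar)
   <= K%:R * ((Dm / gl + 2 * gb * Gm) / Num.sqrt K%:R).
Proof.
move=> K0 hs hD hG.
pose D k := normsq ((st s k).1 - xstar).
pose G k := normsq (g (s k) (st s k).1).
pose w k := (gam s k)^-1.
have e_le : forall k : 'I_K, fS f (s k) (st s k).1 - fS f (s k) xstar <=
   (D k - D k.+1) * w k / 2 + gam s k * G k / 2.
  by move=> k; apply: descent; apply: hs.
apply: le_trans (ler_sum _ (fun k _ => e_le k)) _.
rewrite big_split /= -!mulr_suml.
have Dm0 : 0 <= Dm by apply: le_trans (hD 0%N K0); apply: normsq_ge0.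
have Gm0 : 0 <= Gm by apply: le_trans (hG 0%N K0); apply: normsq_ge0.
have T1 : \sum_(k < K) (D k - D k.+1) * w k <= Dm * w K.-1.
  apply: telesc => //.
  - move=> k; rewrite /w invr_ge0; apply: ltW; exact: gam_gt0.
  - move=> k; exact: winv_mono.
  - move=> k; exact: normsq_ge0.
have wK : w K.-1 <= Num.sqrt K%:R / gl by rewrite /w; have := winv_le s K.-1; rewrite prednK.
have T2 : \sum_(k < K) gam s k * G k <= gb * Gm * (2 * Num.sqrt K%:R).
  apply: le_trans (_ : \sum_(k < K) gb * Gm * (Num.sqrt (k.+1)%:R)^-1 <= _).
    apply: ler_sum => k _.
    apply: le_trans (ler_pM (ltW (gam_gt0 s k)) (@normsq_ge0 _ _ _) (gam_le s k) (hG k (ltn_ord k))) _.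
    by rewrite mulrAC.
  rewrite -mulr_sumr; apply: ler_wpM2l; first by rewrite mulr_ge0 // (le_trans (ltW glp)).
  exact: sum_isqrt.
have T3 : Dm * w K.-1 <= Dm * (Num.sqrt K%:R / gl) by apply: ler_wpM2l.
have q0 : 0 < Num.sqrt K%:R :> R by rewrite sqrtr_gt0 ltr0n.
set q := Num.sqrt K%:R in wK T2 T3 q0 *.
have -> : K%:R * ((Dm / gl + 2 * gb * Gm) / q) = q * (Dm / gl) + 2 * q * gb * Gm.
  have Kq : K%:R = q * q by rewrite /q -expr2 sqr_sqrtr // ler0n.
  by rewrite Kq; field; rewrite !gt_eqF.
set S1 := \sum_(k < K) _ in T1 *; set S2 := \sum_(k < K) _ in T2 *.
have -> : q * (Dm / gl) = Dm * (q / gl) by rewrite mulrCA mulrA.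
have p1 : 0 <= Dm * (q / gl) by rewrite mulr_ge0 // divr_ge0 // ltW.
have gb0 : 0 <= gb by apply: le_trans (ltW glp) glgb.
have p2 : 0 <= gb * Gm * q by rewrite !mulr_ge0 // ltW.
lra.
Qed.

End Dec.

Theorem corollary3 (R : realType) (n d B : nat)
  (f : 'I_n -> 'rV[R]_d -> R) (ell : {set 'I_n} -> R)
  (g : {set 'I_n} -> 'rV[R]_d -> 'rV[R]_d)
  (x0 xstar : 'rV[R]_d) (c0 gl gb : R) (K : nat) :
  (0 < B <= n)%N ->
  (forall i, convexf (f i)) ->
  (forall i, exists m : R, forall x, m <= f i x) ->
  (forall x, favg f xstar <= favg f x) ->
  (forall S : {set 'I_n}, #|S| = B -> forall x, ell S <= fS f S x) ->
  (forall S : {set 'I_n}, #|S| = B -> forall x, is_subgrad (fS f S) x (g S x)) ->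
  0 < c0 -> 0 < gl -> gl <= gb -> (1 <= K)%N ->
  let x := fun (s : {ffun 'I_K -> {set 'I_n}}) (k : nat) =>
    decsps_x f ell g (csqrt c0) c0 gl gb x0 (seq_of s) k in
  let xbar := fun s => K%:R^-1 *: \sum_(k < K) x s k in
  let Dsq := fun s => \big[Num.max/0]_(k < K) normsq (x s k - xstar) in
  let Gsq := fun s => \big[Num.max/0]_(k < K) normsq (g (seq_of s k) (x s k)) in
  expect B (fun s => favg f (xbar s) - favg f xstar)
    <= expect B (fun s => (Dsq s / gl + 2 * gb * Gsq s) / Num.sqrt K%:R).
Proof.
move=> /andP[B0 Bn] convf lb fmin ellb subg c0p glp glgb K1.
pose x := fun (s : {ffun 'I_K -> {set 'I_n}}) (k : nat) =>
    decsps_x f ell g (csqrt c0) c0 gl gb x0 (seq_of s) k.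
pose xbar := fun s => K%:R^-1 *: \sum_(k < K) x s k.
pose Dsq := fun s => \big[Num.max/0]_(k < K) normsq (x s k - xstar).
pose Gsq := fun s => \big[Num.max/0]_(k < K) normsq (g (seq_of s k) (x s k)).
change (expect B (fun s => favg f (xbar s) - favg f xstar)
    <= expect B (fun s => (Dsq s / gl + 2 * gb * Gsq s) / Num.sqrt K%:R)).
have n0 : (0 < n)%N by apply: leq_trans Bn.
have A0 : (0 < #|[set T : {set 'I_n} | #|T| == B]|)%N.
  by rewrite card_draws card_ord bin_gt0.
have Ar : #|[set T : {set 'I_n} | #|T| == B]|%:R != 0 :> R.
  by rewrite pnatr_eq0 -lt0n.
have favgE : forall y, favg f y =
    #|[set T : {set 'I_n} | #|T| == B]|%:R^-1 *
      \sum_(T in [set T : {set 'I_n} | #|T| == B]) fS f T y.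
  by move=> y; rewrite (@unbiased R n d B f y n0 B0) mulKf.
have seqE : forall (s : {ffun 'I_K -> {set 'I_n}}) (k : 'I_K), seq_of s k = s k.
  by move=> s k; rewrite /seq_of valK.
have admE : forall s : {ffun 'I_K -> {set 'I_n}}, admissible B s -> forall k : 'I_K, #|s k| = B.
  by move=> s hs k; apply/eqP; exact: (forallP hs k).
rewrite /expect; apply: ler_wpM2l; first by rewrite invr_ge0 ler0n.
have K0 : (0 < K%:R :> R) by rewrite ltr0n.
rewrite -(ler_pM2l K0) !mulr_sumr.
apply: le_trans (_ : _ <= \sum_(s | admissible B s)
   \sum_(k < K) (favg f (x s k) - favg f xstar)) _.
  apply: ler_sum => s hs.
  rewrite sumrB sumr_const card_ord mulrBr -[favg f xstar *+ K]mulr_natl lerD2r.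
  under eq_bigr => k _ do rewrite favgE.
  rewrite -mulr_sumr exchange_big /=.
  rewrite favgE mulrCA; apply: ler_wpM2l; first by rewrite invr_ge0 ler0n.
  rewrite mulr_sumr; apply: ler_sum => T; rewrite inE => /eqP hT.
  apply: jensen_sub => // y; exists (g T y); exact: subg.
apply: le_trans (_ : _ <= \sum_(s | admissible B s)
   \sum_(k < K) (fS f (seq_of s k) (x s k) - fS f (seq_of s k) xstar)) _.
  rewrite le_eqVlt; apply/orP; left; apply/eqP.
  rewrite exchange_big [in RHS]exchange_big; apply: eq_bigr => k _ /=.
  apply: (mulfI Ar).
  under [in RHS]eq_bigr => s _ do rewrite seqE.
  have Hi : forall s T U, (fun s T => fS f T (x s k) - fS f T xstar) (@upd n K s k U) T
     = (fun s T => fS f T (x s k) - fS f T xstar) s T.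
    move=> s T U /=; congr (fS f T _ - _).
    rewrite /x /decsps_x; congr fst; apply: st_ext => j hj.
    rewrite /seq_of; case: insubP => [j' _ ej|] //=.
    rewrite /upd ffunE ifN //; apply/eqP => e; move: hj; rewrite -ej e ltnn //.
  have I := @indep R n K B k _ Hi; simpl in I.
  rewrite I; rewrite mulr_sumr; apply: eq_bigr => s _.
  rewrite sumrB !(@unbiased R n d B f _ n0 B0) mulrBr.
  by [].
apply: ler_sum => s hs.
rewrite /x /decsps_x; apply: pathwise => //.
- move=> k hk; apply: subg; rewrite (seqE s (Ordinal hk)); exact: admE.
- move=> k hk.
  exact: (le_bigmax _ (fun k : 'I_K => normsq (x s k - xstar)) (Ordinal hk)).
- move=> k hk.
  exact: (le_bigmax _ (fun k : 'I_K => normsq (g (seq_of s k) (x s k))) (Ordinal hk)).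
Qed.
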